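(* Let $G=(V,E)$ be a finite connected simple graph with boundary $\delta V\subseteq V$ and rotation $\rho=(\rho_u)_{u\in V}$, let $G^{BU}$ be its blow-up graph with tails, and let $U$ be the facial quantum walk on $\mathbb{C}^{A^{BU}\cup A_{tl}}$ with coin $H=\begin{pmatrix}a&b\\c&d\end{pmatrix}$, where $H$ is unitary, $abcd\neq 0$ and $d\in\mathbb{R}$; put $\omega=-\det H$ (all as defined in the context). Let $\Psi\in\mathbb{C}^{A^{BU}\cup A_{tl}}$ satisfy $U\Psi=\Psi$ and let $\psi$ be its restriction to $A^{BU}$. Let $u,u'\in V$ be adjacent in $G$, let $e_{br}\in A_{br}$ be the bridge arc from $(u,u')$ to $(u',u)$, and let $e_{is},\epsilon_{is}\in A_{is}(u)$ and $e'_{is},\epsilon'_{is}\in A_{is}(u')$ be the island arcs with $t(e_{is})=o(e_{br})=o(\epsilon_{is})$ and $t(e'_{is})=t(e_{br})=o(\epsilon'_{is})$. Then $$\psi(\epsilon_{is})=\omega\,\psi(e'_{is}),\qquad \psi(\epsilon'_{is})=\omega\,\psi(e_{is}),$$ and $$\psi(e_{br})=\frac{\omega}{b}\bigl(\psi(e_{is})+d\,\psi(e'_{is})\bigr),\qquad \psi(\bar e_{br})=\frac{\omega}{b}\bigl(\psi(e'_{is})+d\,\psi(e_{is})\bigr).$$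
   Context: Setting. $G=(V,E)$ is a finite connected simple graph and $\delta V\subseteq V$ a set of boundary vertices. To each $u\in\delta V$ a semi-infinite path (tail) is attached with origin $u$; let $\tau_u$ be the neighbour of $u$ on its tail. Let $\tilde N_u$ be the set of neighbours of $u$ in $G$, together with $\tau_u$ if $u\in\delta V$. A rotation is a family $\rho=(\rho_u)_{u\in V}$, where $\rho_u$ is a cyclic permutation of $\tilde N_u$ of length $|\tilde N_u|$. Blow-up graph. $V^{BU}=\{(u,v):u\in V,\ v\in\tilde N_u\}$. The arc set is $A^{BU}=A_{is}\sqcup A_{br}$: the island arcs $A_{is}$ are the arcs $(u,v)\to(u,\rho_u(v))$; the bridge arcs $A_{br}$ are the arcs $(u,v)\to(v,u)$ for $u,v\in V$ adjacent in $G$. For $e\in A_{br}$, $\bar e$ denotes the reverse bridge arc. $A_{is}(u)$ is the set of island arcs whose endpoints have first coordinate $u$. For an arc $e$, $o(e)$ and $t(e)$ denote its origin and terminus. Let $\delta V^{BU}=\{(u,\tau_u):u\in\delta V\}$. To each $x\in\delta V^{BU}$ a tail is attached: incoming arcs $e^x_0,e^x_1,\dots$ with $t(e^x_0)=x$ and $t(e^x_{j+1})=o(e^x_j)$, and their reverses $\bar e^x_0,\bar e^x_1,\dots$ (outgoing). $A_{tl}$ is the set of all tail arcs. Each $x\in V^{BU}$ has exactly one incoming and one outgoing island arc, and exactly one further incoming and one further outgoing arc (a bridge arc and its reverse if $x\notin\delta V^{BU}$; the tail arcs $e^x_0$ and $\bar e^x_0$ if $x\in\delta V^{BU}$). Facial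 quantum walk. $U$ acts on $\mathbb{C}^{A^{BU}\cup A_{tl}}$ by $(U\Psi)(e^x_j)=\Psi(e^x_{j+1})$ and $(U\Psi)(\bar e^x_{j+1})=\Psi(\bar e^x_j)$ for all $j\ge 0$ and $x\in\delta V^{BU}$. At every $x\in V^{BU}$, writing $e^{is}_+$ and $e^{br}_+$ for the incoming island and non-island arcs, and $e^{is}_-$ and $e^{br}_-$ for the outgoing island and non-island arcs, $$\begin{pmatrix}(U\Psi)(e^{is}_-)\\(U\Psi)(e^{br}_-)\end{pmatrix}=H\begin{pmatrix}\Psi(e^{is}_+)\\ \Psi(e^{br}_+)\end{pmatrix}.$$ *)

(* Defs.v *)
From HB Require Import structures.
From mathcomp Require Import all_boot all_order all_algebra all_fingroup.
From mathcomp Require Import reals.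
From mathcomp.real_closed Require Import complex.
Set Implicit Arguments. Unset Strict Implicit. Unset Printing Implicit Defensive.
Import Order.TTheory GRing.Theory Num.Theory.
Local Open Scope ring_scope.

(* The extended neighbourhood  ~N_u  is encoded in [option V]:         *)
(*   Some v  <-> the neighbour v of u in G,                            *)
(*   None    <-> the tail neighbour tau_u (only present if u \in dV).  *)

Definition simple_graph (V : finType) (adj : rel V) : Prop :=
  symmetric adj /\ irreflexive adj.

Definition connected_graph (V : finType) (adj : rel V) : Prop :=
  forall u v : V, connect adj u v.

Definition Nt (V : finType) (adj : rel V) (dV : {set V}) (u : V) : pred (option V) :=
  fun y => match y with Some v => adj u v | None => u \in dV end.

(* rho_u is a cyclic permutation of ~N_u of length |~N_u|: it acts only  *)
(* on ~N_u and ~N_u is a single orbit of rho_u.                          *)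
Definition rotation (V : finType) (adj : rel V) (dV : {set V})
    (rho : V -> {perm option V}) : Prop :=
  forall u : V,
    perm_on [set y | Nt adj dV u y] (rho u) /\
    (forall y z, Nt adj dV u y -> Nt adj dV u z ->
       exists k : nat, ((rho u) ^+ k)%g y = z).

(*   Island u y  : (u,y) -> (u, rho_u y)        (y \in ~N_u)            *)
(*   Bridge u v  : (u,v) -> (v,u)               (u,v adjacent)          *)
(*   TailIn u j  : e^x_j,  x = (u,tau_u)        (u \in dV)              *)
(*   TailOut u j : \bar e^x_j                   (u \in dV)              *)
(* Blow-up vertices are pairs (u,y) : V * option V with y \in ~N_u.     *)

Inductive Arc (V : Type) : Type :=
  | Island of V & option V
  | Bridge of V & V
  | TailIn of V & nat
  | TailOut of V & nat.

Section BlowUp.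
Variables (V : finType) (adj : rel V) (dV : {set V}) (rho : V -> {perm option V}).

Definition valid_arc (a : Arc V) : bool :=
  match a with
  | Island u y => Nt adj dV u y
  | Bridge u v => adj u v
  | TailIn u _ => u \in dV
  | TailOut u _ => u \in dV
  end.

Definition in_Ais (u : V) (a : Arc V) : bool :=
  match a with Island w y => (w == u) && Nt adj dV w y | _ => false end.

(* origin / terminus, when they are vertices of the blow-up graph *)
Definition orig (a : Arc V) : option (V * option V) :=
  match a with
  | Island u y => Some (u, y)
  | Bridge u v => Some (u, Some v)
  | TailIn _ _ => None
  | TailOut u j => if j is 0 then Some (u, None) else None
  end.

Definition term (a : Arc V) : option (V * option V) :=
  match a with
  | Island u y => Some (u, rho u y)
  | Bridge u v => Some (v, Some u)
  | TailIn u j => if j is 0 then Some (u, None) else None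
  | TailOut _ _ => None
  end.

Definition in_nonisland (u : V) (y : option V) : Arc V :=
  match y with Some v => Bridge v u | None => TailIn u 0 end.

Variable C : numClosedFieldType.
Variable H : 'M[C]_2.

Definition ca := H ord0 ord0.
Definition cb := H ord0 ord_max.
Definition cc := H ord_max ord0.
Definition cd := H ord_max ord_max.

(* At the blow-up vertex x = (u,y) the incoming island arc is
   Island u (rho_u^-1 y), the incoming non-island arc is in_nonisland u y,
   the outgoing island arc is Island u y and the outgoing non-island arc
   is Bridge u v (y = Some v) or TailOut u 0 (y = None).  *)
Definition walkU (Psi : Arc V -> C) (a : Arc V) : C :=
  match a with
  | Island u y =>
      ca * Psi (Island u (((rho u)^-1)%g y)) + cb * Psi (in_nonisland u y)
  | Bridge u v =>
      cc * Psi (Island u (((rho u)^-1)%g (Some v))) + cd * Psi (Bridge v u)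
  | TailOut u 0 =>
      cc * Psi (Island u (((rho u)^-1)%g None)) + cd * Psi (TailIn u 0)
  | TailOut u j.+1 => Psi (TailOut u j)
  | TailIn u j => Psi (TailIn u j.+1)
  end.

End BlowUp.

Definition unitary_mx (C : numClosedFieldType) (n : nat) (M : 'M[C]_n) : Prop :=
  M *m (map_mx Num.conj M)^T = 1%:M.

(* Main.v *)
Require Import Defs.
From HB Require Import structures.
From mathcomp Require Import all_boot all_order all_algebra all_fingroup.
From mathcomp Require Import reals.
From mathcomp.real_closed Require Import complex.
From mathcomp Require Import ring.
Import Order.TTheory GRing.Theory Num.Theory.
Local Open Scope ring_scope.
Lemma det2 (C : comNzRingType) (H : 'M[C]_2) :
  \det H = H ord0 ord0 * H ord_max ord_max - H ord0 ord_max * H ord_max ord0.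
Proof.
rewrite (expand_det_row _ ord0) !big_ord_recl big_ord0 /cofactor !det_mx11 /=.
rewrite !mxE /=.
have l0 : lift ord0 (0 : 'I_1) = ord_max :> 'I_2 by apply/val_inj.
have l1 : lift ord0 (ord0 : 'I_1) = ord_max :> 'I_2 by apply/val_inj.
have l2 : lift (lift ord0 (ord0 : 'I_1)) (0 : 'I_1) = ord0 :> 'I_2 by apply/val_inj.
rewrite l2 l0 /=.
have -> : (-1 : C) ^+ (0 + bump 0 0) = -1 by rewrite /bump /= expr1.
rewrite addn0 expr0; ring.
Qed.
Lemma alg (C : fieldType) (a b c d sc e e' B B' eps eps' : C) :
  a*sc + b*d = 0 -> c*sc + d*d = 1 -> a*b*c*d != 0 ->
  eps = a*e + b*B' -> B = c*e + d*B' -> eps' = a*e' + b*B -> B' = c*e' + d*B ->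
  let w := -(a*d - b*c) in
  [/\ eps = w*e', eps' = w*e, B = w/b*(e+d*e') & B' = w/b*(e'+d*e)].
Proof.
move=> h1 h2 nz heps hB heps' hB' w.
move: nz; rewrite !mulf_eq0 !negb_or => /andP[/andP[/andP[a0 b0] c0] d0].
have F1 : w * d = - a.
  apply/eqP; rewrite -subr_eq0.
  have -> : w * d - - a = - a * (c*sc + d*d - 1) + c * (a*sc + b*d) by rewrite /w; ring.
  by rewrite h1 h2 subrr mulr0 mulr0 addr0.
have F2 : w * (1 - d^+2) = b * c.
  apply/eqP; rewrite -subr_eq0.
  have -> : w * (1 - d^+2) - b * c = - d * (w * d - - a) by rewrite /w; ring.
  by rewrite F1 subrr mulr0.
have k : 1 - d^+2 != 0.
  apply/negP => /eqP k; move: F2; rewrite k mulr0 => /esym/eqP.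
  by rewrite mulf_eq0 (negPf b0) (negPf c0).
have bk : b * (1 - d^+2) != 0 by rewrite mulf_neq0.
have EB : B = w/b*(e+d*e').
  apply: (mulfI bk).
  have -> : b * (1 - d ^+ 2) * (w / b * (e + d * e')) = (w * (1 - d^+2)) * (e + d*e')
    by field.
  rewrite F2; apply/eqP; rewrite -subr_eq0.
  have -> : b * (1 - d ^+ 2) * B - b * c * (e + d * e') =
     b * ((B - (c*e + d*B')) + d * (B' - (c*e' + d*B))) by ring.
  by rewrite -hB -hB' !subrr mulr0 addr0 mulr0.
have EB' : B' = w/b*(e'+d*e).
  apply: (mulfI bk).
  have -> : b * (1 - d ^+ 2) * (w / b * (e' + d * e)) = (w * (1 - d^+2)) * (e' + d*e)
    by field.
  rewrite F2; apply/eqP; rewrite -subr_eq0.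
  have -> : b * (1 - d ^+ 2) * B' - b * c * (e' + d * e) =
     b * ((B' - (c*e' + d*B)) + d * (B - (c*e + d*B'))) by ring.
  by rewrite -hB -hB' !subrr mulr0 addr0 mulr0.
split => //.
- rewrite heps EB'; apply/eqP; rewrite -subr_eq0.
  have -> : a * e + b * (w / b * (e' + d * e)) - w * e' = e * (w * d - - a) by field.
  by rewrite F1 subrr mulr0.
- rewrite heps' EB; apply/eqP; rewrite -subr_eq0.
  have -> : a * e' + b * (w / b * (e + d * e')) - w * e = e' * (w * d - - a) by field.
  by rewrite F1 subrr mulr0.
Qed.
Theorem mainTheorem1 (R : realType) (V : finType) (adj : rel V) (dV : {set V})
    (rho : V -> {perm option V}) (H : 'M[R[i]]_2)
    (Psi : Arc V -> R[i]) (u u' : V)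
    (e_is eps_is e'_is eps'_is : Arc V) :
  simple_graph adj ->
  connected_graph adj ->
  rotation adj dV rho ->
  unitary_mx H ->
  ca H * cb H * cc H * cd H != 0 ->
  cd H \is Num.real ->
  (forall a, valid_arc adj dV a -> walkU rho H Psi a = Psi a) ->
  adj u u' ->
  in_Ais adj dV u e_is -> in_Ais adj dV u eps_is ->
  in_Ais adj dV u' e'_is -> in_Ais adj dV u' eps'_is ->
  term rho e_is = orig (Bridge u u') ->
  orig (Bridge u u') = orig eps_is ->
  term rho e'_is = term rho (Bridge u u') ->
  term rho (Bridge u u') = orig eps'_is ->
  let omega := - \det H in
  [/\ Psi eps_is = omega * Psi e'_is,
      Psi eps'_is = omega * Psi e_is,
      Psi (Bridge u u') = omega / cb H * (Psi e_is + cd H * Psi e'_is)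
    & Psi (Bridge u' u) = omega / cb H * (Psi e'_is + cd H * Psi e_is)].
Proof.
move=> [Hsym _] _ _ hU nz hd hW huu' He Heps He' Heps' Hte Hoe Hte' Hoe' omega.
case: e_is He Hte => // w y /andP[/eqP-> Hy] [] Hr.
case: eps_is Heps Hoe => // w1 z /andP[/eqP-> _] [] Hz; subst z.
case: e'_is He' Hte' => // w2 y' /andP[/eqP-> Hy'] [] Hr'.
case: eps'_is Heps' Hoe' => // w3 z' /andP[/eqP-> _] [] Hz'; subst z'.
have hu'u : adj u' u by rewrite Hsym.
have W1 := hW (Island u (Some u')) huu'.
have W2 := hW (Bridge u u') huu'.
have W3 := hW (Island u' (Some u)) hu'u.
have W4 := hW (Bridge u' u) hu'u.
rewrite /= -Hr -Hr' !permK in W1 W2 W3 W4.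
rewrite Hr in W1; rewrite Hr' in W3.
move: hU; rewrite /unitary_mx => /matrixP hU.
have l1 : lift ord0 (ord0 : 'I_1) = ord_max :> 'I_2 by apply/val_inj.
have E01 : ca H * (cc H)^* + cb H * (cd H)^* = 0.
  by have := hU ord0 ord_max; rewrite !mxE !big_ord_recl big_ord0 /= !mxE l1 addr0.
have E11 : cc H * (cc H)^* + cd H * (cd H)^* = 1.
  by have := hU ord_max ord_max; rewrite !mxE !big_ord_recl big_ord0 /= !mxE l1 addr0.
rewrite (conj_Creal hd) in E01 E11.
rewrite /omega det2.
exact: (alg _ _ _ _ _ _ _ _ _ _ _ _ E01 E11 nz (esym W1) (esym W2) (esym W3) (esym W4)).
Qed.
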